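(* Let $\lambda >0$ and $t\ge 1$. For any $k\geq 3$, $$\Pr\big(|Z_k(t) - \mathbb{E}[Z_k(t)]| \geq \lambda\big) \leq 2e^{-\frac{\lambda^2}{72t}},$$ where $Z_k(t)$ is the number of vertices of degree $k$ in a Random Apollonian Network after $t$ steps.
   Context: A Random Apollonian Network (RAN) is generated as follows: start (at time $t=0$) with a single triangular face. At each step $t=1,2,\dots$, pick one of the current (bounded) triangular faces uniformly at random, insert a new vertex inside it, and connect it to the three vertices on the boundary of that face, subdividing the face into three new triangular faces. $Z_k(t)$ denotes the number of vertices of degree exactly $k$ after $t$ steps. *)

(* Defs.v *)
From HB Require Import structures.
From mathcomp Require Import all_boot all_order all_algebra.
From mathcomp Require Import reals sequences exp.
Set Implicit Arguments. Unset Strict Implicit. Unset Printing Implicit Defensive.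
Import Order.TTheory GRing.Theory Num.Theory.

(* Vertices are natural numbers: 0,1,2 are the initial triangle, the vertex
   inserted at step s (s = 0,...,t-1, i.e. the (s+1)-th step) is s+3.
   A state is (list of bounded triangular faces, list of edges). *)
Definition face := (nat * nat * nat)%type.
Definition ran_state := (seq face * seq (nat * nat))%type.

Definition ran_init : ran_state :=
  ([:: (0, 1, 2)], [:: (0, 1); (1, 2); (0, 2)]).

Definition ran_step (st : ran_state) (v i : nat) : ran_state :=
  let fs := st.1 in
  let: (a, b, c) := nth (0, 0, 0) fs i in
  (take i fs ++ drop i.+1 fs ++ [:: (a, b, v); (b, c, v); (a, c, v)],
   [:: (a, v); (b, v); (c, v)] ++ st.2).

(* Run the process from a sequence of face choices (choice at step s is
   the index of the face chosen among the 2s+1 current faces). *)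
Definition ran_run (cs : seq nat) : ran_state :=
  foldl (fun st p => ran_step st (p.1 + 3) p.2) ran_init
        (zip (iota 0 (size cs)) cs).

(* Sample space after t steps: choice functions with f s < 2s+1 (the number
   of bounded faces before step s+1); the uniform measure on it is exactly
   the law of the RAN process. *)
Definition ran_omega (t : nat) : {set {ffun 'I_t -> 'I_(2 * t)}} :=
  [set f : {ffun 'I_t -> 'I_(2 * t)} | [forall s : 'I_t, (f s < (2 * s).+1)%N]].

Definition ran_choices t (f : {ffun 'I_t -> 'I_(2 * t)}) : seq nat :=
  [seq nat_of_ord (f s) | s <- enum 'I_t].

Definition degree (v : nat) (es : seq (nat * nat)) : nat :=
  count (fun e => (e.1 == v) || (e.2 == v)) es.

Definition Zk (k t : nat) (f : {ffun 'I_t -> 'I_(2 * t)}) : nat :=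
  let es := (ran_run (ran_choices f)).2 in
  count (fun v => degree v es == k) (iota 0 (t + 3)).

Local Open Scope ring_scope.

Definition ran_expect (R : realType) (k t : nat) : R :=
  (\sum_(f in ran_omega t) (Zk k f)%:R) / (#|ran_omega t|)%:R.

Definition ran_prob (R : realType) (t : nat)
  (E : {ffun 'I_t -> 'I_(2 * t)} -> bool) : R :=
  (#|[set f in ran_omega t | E f]|)%:R / (#|ran_omega t|)%:R.

(* Main.v *)
Require Import Defs.
From HB Require Import structures.
From mathcomp Require Import all_boot all_order all_algebra.
From mathcomp Require Import reals sequences exp.
From mathcomp Require Import ring lra zify.
Import Order.TTheory GRing.Theory Num.Theory.
Set Implicit Arguments. Unset Strict Implicit. Unset Printing Implicit Defensive.

Definition ch (x : face) (v : nat) : seq face :=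
  let: (a, b, c) := x in [:: (a, b, v); (b, c, v); (a, c, v)].
Definition ne (x : face) (v : nat) : seq (nat * nat) :=
  let: (a, b, c) := x in [:: (a, v); (b, v); (c, v)].

Lemma size_ch x v : size (ch x v) = 3%N.
Proof. by case: x => [[? ?] ?]. Qed.

Lemma ran_stepE st v i : ran_step st v i =
  (take i st.1 ++ drop i.+1 st.1 ++ ch (nth (0,0,0) st.1 i) v,
   ne (nth (0,0,0) st.1 i) v ++ st.2).
Proof. by rewrite /ran_step; case: (nth _ _ _) => [[a b] c]. Qed.

Definition run_from (st : ran_state) (s : nat) (cs : seq nat) : ran_state :=
  foldl (fun st p => ran_step st (p.1 + 3) p.2) st (zip (iota s (size cs)) cs).

Lemma run_from_cons st s i cs :
  run_from st s (i :: cs) = run_from (ran_step st (s + 3) i) s.+1 cs.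
Proof. by []. Qed.

Lemma perm_rem_l (T : eqType) (x : T) L L' : perm_eq L L' -> perm_eq (rem x L) (rem x L').
Proof.
move=> pLL'; apply/permP => P; rewrite !count_rem (perm_mem pLL').
by rewrite (permP pLL').
Qed.

Lemma perm_take_drop (T : eqType) (L : seq T) i x0 : (i < size L)%N ->
  perm_eq (take i L ++ drop i.+1 L) (rem (nth x0 L i) L).
Proof.
move=> iL.
have xin : nth x0 L i \in L by apply: mem_nth.
rewrite -(perm_cons (nth x0 L i)).
apply: (@perm_trans _ L); last exact: (perm_to_rem xin).
apply: (@perm_trans _ (take i L ++ nth x0 L i :: drop i.+1 L)).
  by rewrite -cat1s perm_catCA.
by rewrite -drop_nth // cat_take_drop.
Qed.


Section All2.
Variables (T : Type) (r : T -> T -> bool).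
Lemma all2_cat' s1 s2 t1 t2 : all2 r s1 t1 -> all2 r s2 t2 -> all2 r (s1 ++ s2) (t1 ++ t2).
Proof.
elim: s1 t1 => [|x s1 IH] [|y t1] //= /andP[rxy h] h2.
by rewrite rxy IH.
Qed.
Lemma all2_take' s1 t1 i : all2 r s1 t1 -> all2 r (take i s1) (take i t1).
Proof.
elim: s1 t1 i => [|x s1 IH] [|y t1] [|i] //= /andP[rxy h].
by rewrite rxy IH.
Qed.
Lemma all2_drop' s1 t1 i : all2 r s1 t1 -> all2 r (drop i s1) (drop i t1).
Proof.
move=> h; elim: s1 t1 i h => [|x s1 IH] [|y t1] [|i] //= /andP[rxy h].
- exact: IH.
Qed.
Lemma all2_size' s1 t1 : all2 r s1 t1 -> size s1 = size t1.
Proof. by elim: s1 t1 => [|x s1 IH] [|y t1] //= /andP[_ h]; rewrite (IH _ h). Qed.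
Lemma all2_nth' s1 t1 x0 i : all2 r s1 t1 -> (i < size s1)%N -> r (nth x0 s1 i) (nth x0 t1 i).
Proof.
elim: s1 t1 i => [|x s1 IH] [|y t1] [|i] //= /andP[rxy h] hi; first by [].
exact: IH.
Qed.
Lemma all2_refl' s1 : (forall x, r x x) -> all2 r s1 s1.
Proof. by move=> rr; elim: s1 => //= x s1 ->; rewrite rr. Qed.
End All2.

Definition ceq (D : seq nat) (u u' : nat) := (u == u') || ((u \in D) && (u' \in D)).
Definition frel (D : seq nat) (x y : face) :=
  [&& ceq D x.1.1 y.1.1, ceq D x.1.2 y.1.2 & ceq D x.2 y.2].

Lemma frel_refl D x : frel D x x.
Proof. by rewrite /frel /ceq !eqxx. Qed.

Lemma ceq_eq D a a' u : ceq D a a' -> u \notin D -> (a == u) = (a' == u).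
Proof.
case/orP => [/eqP->//|/andP[aD a'D]] uD.
have ->: (a == u) = false by apply/negP => /eqP au; move: aD; rewrite au (negPf uD).
have ->: (a' == u) = false by apply/negP => /eqP au; move: a'D; rewrite au (negPf uD).
by [].
Qed.

Lemma frel_ch D x y v : frel D x y -> all2 (frel D) (ch x v) (ch y v).
Proof.
case: x => [[a b] c]; case: y => [[a' b'] c']; rewrite /frel /= => /and3P[h1 h2 h3].
by rewrite h1 h2 h3 /ceq eqxx.
Qed.

Lemma frel_ne D x y v u : frel D x y -> u \notin D ->
  degree u (ne x v) = degree u (ne y v).
Proof.
case: x => [[a b] c]; case: y => [[a' b'] c']; rewrite /frel /= => /and3P[h1 h2 h3] uD.
by rewrite /degree /= (ceq_eq h1 uD) (ceq_eq h2 uD) (ceq_eq h3 uD).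
Qed.

Lemma degree_cat u e1 e2 : degree u (e1 ++ e2) = (degree u e1 + degree u e2)%N.
Proof. by rewrite /degree count_cat. Qed.

Lemma count_diff (T : eqType) (P1 P2 : pred T) (D : seq T) l :
  (forall u, u \notin D -> P1 u = P2 u) ->
  (count P1 l <= count P2 l + count (mem D) l)%N.
Proof.
move=> h; elim: l => //= x l IH.
case xD: (x \in D); last by rewrite h ?xD //; lia.
case: (P1 x); case: (P2 x) => /=; lia.
Qed.

Lemma count_memD (D : seq nat) m n : (count (mem D) (iota m n) <= size D)%N.
Proof.
rewrite -size_filter; apply: uniq_leq_size; first by rewrite filter_uniq // iota_uniq.
by move=> x; rewrite mem_filter => /andP[].
Qed.

Section Proc.
Variable R : realType.
Variables k t : nat.
Local Open Scope ring_scope.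

Definition Zf (es : seq (nat * nat)) : nat :=
  count (fun v => degree v es == k) (iota 0 (t + 3)).

Fixpoint A (n s : nat) (G : seq nat -> R) : R :=
  match n with
  | 0 => G [::]
  | n'.+1 => (\sum_(i < (2 * s).+1) A n' s.+1 (fun cs => G ((i : nat) :: cs))) / ((2 * s).+1)%:R
  end.

Definition V (st : ran_state) (s n : nat) : R :=
  A n s (fun cs => (Zf (run_from st s cs).2)%:R).

Lemma V0 st s : V st s 0 = (Zf st.2)%:R.
Proof. by []. Qed.

Lemma VS st s n : V st s n.+1 =
  (\sum_(i < (2 * s).+1) V (ran_step st (s + 3) i) s.+1 n) / ((2 * s).+1)%:R.
Proof. by []. Qed.

Lemma V_perm n s L L' E : perm_eq L L' -> size L = (2 * s).+1 ->
  V (L, E) s n = V (L', E) s n.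
Proof.
elim: n s L L' E => [|n IH] s L L' E pLL' sL; first by [].
have sL' : size L' = (2 * s).+1 by rewrite -(perm_size pLL').
pose W (M : seq face) (x : face) :=
  V (rem x M ++ ch x (s + 3), ne x (s + 3) ++ E) s.+1 n.
have stepW M : size M = (2 * s).+1 -> forall i : 'I_(2 * s).+1,
    V (ran_step (M, E) (s + 3) i) s.+1 n = W M (nth (0,0,0) M i).
  move=> sM i; rewrite ran_stepE /= /W catA; apply: IH.
    by rewrite perm_cat2r perm_take_drop // sM.
  have iM : (i < size M)%N by rewrite sM.
  rewrite !size_cat size_takel ?(ltnW iM) // size_drop /=.
  rewrite size_ch sM; lia.
have sumW M : size M = (2 * s).+1 ->
   \sum_(i < (2 * s).+1) V (ran_step (M, E) (s + 3) i) s.+1 n = \sum_(x <- M) W M x.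
  move=> sM; rewrite (big_nth (0,0,0)) sM big_mkord.
  by apply: eq_bigr => i _; rewrite stepW.
rewrite !VS sumW // sumW //; congr (_ / _).
rewrite (perm_big _ pLL') /=; apply: eq_big_seq => x xL'.
rewrite /W; apply: IH.
  by rewrite perm_cat2r perm_rem_l.
have xL : x \in L by rewrite (perm_mem pLL').
rewrite size_cat size_rem // sL size_ch; lia.
Qed.


Lemma nat_absdiff (a b c d : nat) : (a <= b + c)%N -> (b <= a + c)%N -> (c <= d)%N ->
  `|a%:R - b%:R| <= d%:R :> R.
Proof.
move=> h1 h2 h3.
have e1 : (a%:R <= b%:R + d%:R :> R) by rewrite -natrD ler_nat; lia.
have e2 : (b%:R <= a%:R + d%:R :> R) by rewrite -natrD ler_nat; lia.
rewrite ler_norml; apply/andP; split; lra.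
Qed.

Lemma Zf_diff D E1 E2 : (forall u, u \notin D -> degree u E1 = degree u E2) ->
  `|(Zf E1)%:R - (Zf E2)%:R| <= (size D)%:R :> R.
Proof.
move=> h; rewrite /Zf.
have h1 := @count_diff _ (fun v => degree v E1 == k) (fun v => degree v E2 == k) D (iota 0 (t + 3)).
have h2 := @count_diff _ (fun v => degree v E2 == k) (fun v => degree v E1 == k) D (iota 0 (t + 3)).
have h3 := count_memD D 0 (t + 3).
have hh1 : forall u, u \notin D -> (degree u E1 == k) = (degree u E2 == k) by move=> u uD; rewrite h.
have hh2 : forall u, u \notin D -> (degree u E2 == k) = (degree u E1 == k) by move=> u uD; rewrite h.
exact: nat_absdiff (h1 hh1) (h2 hh2) h3.
Qed.

Lemma V_couple n s D L1 E1 L2 E2 :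
  all2 (frel D) L1 L2 -> (forall u, u \notin D -> degree u E1 = degree u E2) ->
  size L1 = (2 * s).+1 ->
  `|V (L1, E1) s n - V (L2, E2) s n| <= (size D)%:R.
Proof.
elim: n s L1 E1 L2 E2 => [|n IH] s L1 E1 L2 E2 hL hE sL; first exact: Zf_diff.
rewrite !VS -mulrBl -sumrB normrM.
have N0 : 0 < ((2 * s).+1)%:R :> R by rewrite ltr0n.
rewrite [`|_^-1|]ger0_norm ?invr_ge0 ?ler0n // ler_pdivrMr //.
apply: le_trans (ler_norm_sum _ _ _) _.
apply: le_trans (_ : \sum_(i < (2 * s).+1) (size D)%:R <= _).
  apply: ler_sum => i _; rewrite !ran_stepE /=; apply: IH.
  - have iL : (i < size L1)%N by rewrite sL.
    apply: all2_cat'; first exact: all2_take'.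
    apply: all2_cat'; first exact: all2_drop'.
    by apply: frel_ch; apply: all2_nth'.
  - move=> u uD; rewrite !degree_cat hE //.
    have iL : (i < size L1)%N by rewrite sL.
    by rewrite (frel_ne _ (all2_nth' _ hL iL) uD).
  - have iL : (i < size L1)%N by rewrite sL.
    rewrite !size_cat size_takel ?(ltnW iL) // size_drop size_ch sL; lia.
by rewrite sumr_const card_ord mulr_natr.
Qed.


Lemma V_step_rem n s L E i : size L = (2 * s).+1 -> (i < (2 * s).+1)%N ->
  V (ran_step (L, E) (s + 3) i) s.+1 n =
  V (rem (nth (0,0,0)%N L i) L ++ ch (nth (0,0,0)%N L i) (s + 3),
     ne (nth (0,0,0)%N L i) (s + 3) ++ E) s.+1 n.
Proof.
move=> sL iN; have iL : (i < size L)%N by rewrite sL.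
rewrite ran_stepE /= catA; apply: V_perm.
  by rewrite perm_cat2r perm_take_drop.
rewrite !size_cat size_takel ?(ltnW iL) // size_drop size_ch sL; lia.
Qed.

Lemma V_step_pair n s L E i j : size L = (2 * s).+1 ->
  (i < (2 * s).+1)%N -> (j < (2 * s).+1)%N ->
  `|V (ran_step (L, E) (s + 3) i) s.+1 n - V (ran_step (L, E) (s + 3) j) s.+1 n| <= 6.
Proof.
move=> sL iN jN; rewrite !V_step_rem //.
set x := nth (0,0,0)%N L i; set y := nth (0,0,0)%N L j.
have xL : x \in L by apply: mem_nth; rewrite sL.
have yL : y \in L by apply: mem_nth; rewrite sL.
have [<-|nxy] := eqVneq x y; first by rewrite subrr normr0 ler0n.
have yrx : y \in rem x L by apply: rem_mem; rewrite // eq_sym.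
set R0 := rem y (rem x L).
have p1 : perm_eq (rem x L) (y :: R0) by apply: perm_to_rem.
have p2 : perm_eq (rem y L) (x :: R0).
  rewrite -(perm_cons y); apply: (@perm_trans _ L).
    by rewrite perm_sym; apply: perm_to_rem.
  apply: (@perm_trans _ (x :: y :: R0)).
    by apply: (@perm_trans _ (x :: rem x L)); [apply: perm_to_rem | rewrite perm_cons].
  by rewrite -[x :: y :: R0]cat1s -[y :: R0]cat1s perm_catCA.
have sz : forall z, z \in L -> size (rem z L ++ ch z (s + 3)) = (2 * s.+1).+1.
  by move=> z zL; rewrite size_cat size_rem // sL size_ch; lia.
have e1 : V (rem x L ++ ch x (s+3), ne x (s+3) ++ E) s.+1 n =
    V (y :: R0 ++ ch x (s+3), ne x (s+3) ++ E) s.+1 n.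
  by apply: V_perm; [rewrite -cat_cons perm_cat2r | apply: sz].
have e2 : V (rem y L ++ ch y (s+3), ne y (s+3) ++ E) s.+1 n =
    V (x :: R0 ++ ch y (s+3), ne y (s+3) ++ E) s.+1 n.
  by apply: V_perm; [rewrite -cat_cons perm_cat2r | apply: sz].
rewrite e1 e2.
pose D := [:: x.1.1; x.1.2; x.2; y.1.1; y.1.2; y.2].
have fxy : frel D x y by rewrite /frel /ceq !inE !eqxx !orbT.
have fyx : frel D y x by rewrite /frel /ceq !inE !eqxx !orbT.
have -> : 6 = (size D)%:R :> R by [].
apply: V_couple.
- rewrite /= fyx /=; apply: all2_cat'; first by apply: all2_refl' => z; apply: frel_refl.
  exact: frel_ch.
- by move=> u uD; rewrite !degree_cat (frel_ne _ fxy uD).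
- have sR0 : size R0 = ((2 * s).+1).-1.-1 by rewrite /R0 size_rem // size_rem // sL.
  have : (0 < size (rem x L))%N by case: (rem x L) yrx.
  rewrite size_rem // sL => ?.
  by rewrite /= size_cat size_ch sR0; lia.
Qed.

End Proc.


Section Anal.
Variable R : realType.
Local Open Scope ring_scope.

Lemma poly_ineq (x : R) : -(2/3) <= x <= 2/3 ->
  1 <= (1 + x + x ^+ 2) * (1 - x / 4) ^+ 4.
Proof.
case/andP => h1 h2.
have hq : 0 <= 96 - 176 * x + 81 * x ^+ 2 - 15 * x ^+ 3 + x ^+ 4.
  have a1 : 0 <= (2/3 - x) * (5/3 - x) by nra.
  have a2 : 0 <= x ^+ 2 * (10 - 15 * x) by nra.
  have a3 : 0 <= x ^+ 4 by rewrite exprn_even_ge0.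
  nra.
have -> : (1 + x + x ^+ 2) * (1 - x / 4) ^+ 4 =
   1 + x ^+ 2 * (96 - 176 * x + 81 * x ^+ 2 - 15 * x ^+ 3 + x ^+ 4) / 256.
  by field.
have : 0 <= x ^+ 2 * (96 - 176 * x + 81 * x ^+ 2 - 15 * x ^+ 3 + x ^+ 4) / 256.
  by apply: divr_ge0 => //; apply: mulr_ge0 => //; rewrite sqr_ge0.
lra.
Qed.

Lemma expR_poly (x : R) : `|x| <= 2/3 -> expR x <= 1 + x + x ^+ 2.
Proof.
move=> hx; have := hx; rewrite ler_norml => /andP[h1 h2].
have hp : 0 < 1 - x / 4 by lra.
have e1 : expR (x / 4) <= (1 - x / 4)^-1.
  have := expR_ge1Dx (- (x / 4)); rewrite expRN => h.
  rewrite -[(1 - x / 4)^-1]div1r ler_pdivlMr //.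
  have := ler_wpM2l (expR_ge0 (x / 4)) h.
  by rewrite mulfV ?gt_eqF ?expR_gt0.
have -> : x = 4%:R * (x / 4) by field.
rewrite expRM_natl.
apply: le_trans (_ : ((1 - x / 4)^-1) ^+ 4 <= _).
  apply: lerXn2r; [by rewrite nnegrE expR_ge0 | by rewrite nnegrE invr_ge0 ltW | exact: e1].
rewrite exprVn -[((1 - x / 4) ^+ 4)^-1]div1r ler_pdivrMr ?exprn_gt0 //.
have -> : 4%:R * (x / 4) = x by field.
apply: poly_ineq; lra.
Qed.


Lemma sum_split3 n (F G H : 'I_n -> R) :
  \sum_i (F i + G i + H i) = \sum_i F i + \sum_i G i + \sum_i H i.
Proof. by rewrite !big_split. Qed.

Lemma hoeff n (a : 'I_n -> R) h : (0 < n)%N ->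
  (forall i j, `|a i - a j| <= 6) -> `|h| <= 1/9 ->
  (\sum_i expR (h * (a i - (\sum_j a j) / n%:R))) / n%:R <= expR (18 * h ^+ 2).
Proof.
move=> n0 ha hh.
set N := n%:R; have N0 : 0 < N by rewrite ltr0n.
set m := (\sum_j a j) / N.
set y := fun i => a i - m.
have ysum : \sum_i y i = 0.
  rewrite /y sumrB sumr_const card_ord -mulr_natr /m -/N; field; lra.
have yb i : `|y i| <= 6.
  have -> : y i = (\sum_j (a i - a j)) / N.
    rewrite sumrB sumr_const card_ord -mulr_natr -/N /y /m; field; lra.
  rewrite normrM [`|N^-1|]ger0_norm ?invr_ge0 ?(ltW N0) // ler_pdivrMr //.
  apply: le_trans (ler_norm_sum _ _ _) _.
  apply: le_trans (_ : \sum_(j < n) (6 : R) <= _); first by apply: ler_sum => j _.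
  by rewrite sumr_const card_ord mulr_natr.
have yd i j : y i - y j = a i - a j by rewrite /y; ring.
set S2 := \sum_i y i ^+ 2.
have inner i : \sum_j (y i - y j) ^+ 2 = N * y i ^+ 2 + S2.
  rewrite (eq_bigr (fun j => y i ^+ 2 + (- (2 * y i)) * y j + y j ^+ 2)); last first.
    by move=> j _; ring.
  rewrite sum_split3 sumr_const card_ord -mulr_sumr ysum -/S2 -mulr_natl -/N; ring.
have E : \sum_i \sum_j (y i - y j) ^+ 2 = 2 * N * S2.
  rewrite (eq_bigr _ (fun i _ => inner i)) big_split /= sumr_const card_ord -mulr_sumr.
  rewrite -mulr_natl -/N -/S2; ring.
have B : \sum_i \sum_j (y i - y j) ^+ 2 <= N * N * 36.
  apply: le_trans (_ : \sum_(i < n) \sum_(j < n) (36 : R) <= _).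
    apply: ler_sum => i _; apply: ler_sum => j _.
    rewrite yd -real_normK ?num_real //; have hij := ha i j.
    set u := `|_| in hij *; have h0 : 0 <= u by apply: normr_ge0.
    have := ler_pM h0 h0 hij hij; rewrite -expr2; lra.
  by rewrite !sumr_const !card_ord -mulrnA -[36 *+ (n * n)]mulr_natl natrM.
have S2b : S2 <= 18 * N.
  have h2 : N * S2 <= N * (18 * N) by rewrite E in B; lra.
  by rewrite -(ler_pM2l N0).
rewrite ler_pdivrMr //.
apply: le_trans (_ : \sum_i (1 + h * y i + h ^+ 2 * y i ^+ 2) <= _).
  apply: ler_sum => i _; rewrite -exprMn.
  apply: expR_poly; rewrite normrM.
  have := ler_pM (normr_ge0 h) (normr_ge0 (y i)) hh (yb i); lra.
rewrite sum_split3 sumr_const card_ord -!mulr_sumr ysum -/S2 -mulr_natr -/N.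
have e1 := expR_ge1Dx (18 * h ^+ 2).
have h2 : 0 <= h ^+ 2 by rewrite sqr_ge0.
have e2 := ler_wpM2l h2 S2b.
have e3 := ler_wpM2r (ltW N0) e1.
rewrite mulr0 mul1r; lra.
Qed.

End Anal.


Section Fin.
Variable R : realType.
Local Open Scope ring_scope.

Lemma A_le n s (G G' : seq nat -> R) : (forall cs, G cs <= G' cs) -> A n s G <= A n s G'.
Proof.
elim: n s G G' => [|n IH] s G G' h /=; first exact: h.
apply: ler_wpM2r; first by rewrite invr_ge0 ler0n.
by apply: ler_sum => i _; apply: IH.
Qed.

Lemma A_ext n s (G G' : seq nat -> R) : (forall cs, G cs = G' cs) -> A n s G = A n s G'.
Proof. by move=> h; apply/le_anti; rewrite !A_le // => cs; rewrite h. Qed.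

Lemma A_scale n s c (G : seq nat -> R) : A n s (fun cs => c * G cs) = c * A n s G.
Proof.
elim: n s G => [|n IH] s G //=.
rewrite mulrA mulr_sumr; congr (_ / _); apply: eq_bigr => i _.
exact: IH.
Qed.

Lemma A_add n s (G G' : seq nat -> R) :
  A n s (fun cs => G cs + G' cs) = A n s G + A n s G'.
Proof.
elim: n s G G' => [|n IH] s G G' //=.
rewrite -mulrDl -big_split /=; congr (_ / _); apply: eq_bigr => i _.
exact: IH.
Qed.

Lemma A_const n s (c : R) : A n s (fun _ => c) = c.
Proof.
elim: n s => [|n IH] s //=.
rewrite (eq_bigr (fun _ => c)); last by move=> i _; apply: IH.
by rewrite sumr_const card_ord -[c *+ _]mulr_natr mulfK // pnatr_eq0.
Qed.


Lemma size_step st s i : size st.1 = (2 * s).+1 -> (i < (2 * s).+1)%N ->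
  size (ran_step st (s + 3) i).1 = (2 * s.+1).+1.
Proof.
move=> sL iN; have iL : (i < size st.1)%N by rewrite sL.
rewrite ran_stepE /= !size_cat size_takel ?(ltnW iL) // size_drop size_ch sL; lia.
Qed.

Lemma moment k t n s st (h : R) : size st.1 = (2 * s).+1 -> `|h| <= 1/9 ->
  A n s (fun cs => expR (h * ((Zf k t (run_from st s cs).2)%:R - @V R k t st s n)))
    <= expR (18 * h ^+ 2 * n%:R).
Proof.
elim: n s st => [|n IH] s st sL hh.
  by rewrite /= subrr !mulr0 expR0.
set Vi := fun i : 'I_(2 * s).+1 => @V R k t (ran_step st (s + 3) i) s.+1 n.
have VE : @V R k t st s n.+1 = (\sum_i Vi i) / ((2 * s).+1)%:R by [].
rewrite [A _ _ _]/= VE.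
set W := (\sum_i Vi i) / _.
have step (i : 'I_(2 * s).+1) : A n s.+1 (fun cs => expR (h * ((Zf k t (run_from st s ((i : nat) :: cs)).2)%:R - W)))
   <= expR (h * (Vi i - W)) * expR (18 * h ^+ 2 * n%:R).
  rewrite (@A_ext n s.+1 _ (fun cs => expR (h * (Vi i - W)) *
      expR (h * ((Zf k t (run_from (ran_step st (s + 3) i) s.+1 cs).2)%:R - Vi i)))).
    rewrite A_scale; apply: ler_wpM2l; first exact: expR_ge0.
    by apply: IH => //; apply: size_step.
  by move=> cs; rewrite -expRD; congr expR; rewrite /=; ring.
apply: le_trans (_ : (\sum_i (expR (h * (Vi i - W)) * expR (18 * h ^+ 2 * n%:R))) /
   ((2 * s).+1)%:R <= _).
  by apply: ler_wpM2r; [rewrite invr_ge0 ler0n | apply: ler_sum => i _; apply: step].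
rewrite -mulr_suml mulrAC.
apply: le_trans (_ : expR (18 * h ^+ 2) * expR (18 * h ^+ 2 * n%:R) <= _).
  apply: ler_wpM2r; first exact: expR_ge0.
  apply: hoeff => // i j.
  rewrite /Vi; case: st sL {VE W step Vi IH} => L E /= sL.
  by apply: V_step_pair.
rewrite -expRD -addn1 natrD; rewrite le_eqVlt; apply/orP; left; apply/eqP; congr expR; ring.
Qed.

End Fin.


Fixpoint VL (n s : nat) : seq (seq nat) :=
  match n with
  | 0 => [:: [::]]
  | n'.+1 => [seq i :: cs | i <- iota 0 (2 * s).+1, cs <- VL n' s.+1]
  end.

Fixpoint validb (s : nat) (cs : seq nat) : bool :=
  match cs with
  | [::] => true
  | c :: cs' => (c < (2 * s).+1) && validb s.+1 cs'
  end.

Lemma VL_S n s : VL n.+1 s = [seq i :: cs | i <- iota 0 (2 * s).+1, cs <- VL n s.+1].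
Proof. by []. Qed.

Lemma VL_uniq n s : uniq (VL n s).
Proof.
elim: n s => [|n IH] s //.
apply: (allpairs_uniq (f := fun (i : nat) (cs : seq nat) => i :: cs)); [exact: iota_uniq | exact: IH |].
by move=> [a b] [c d] _ _ /= [-> ->].
Qed.

Lemma mem_VL n s cs : (cs \in VL n s) = (size cs == n) && validb s cs.
Proof.
elim: n s cs => [|n IH] s cs.
  by rewrite /= inE; case: cs.
apply/allpairsP/idP.
  move=> [[i c] [iI cV ->]]; move: iI cV.
  rewrite [(i, c).1]/= [(i, c).2]/= IH mem_iota add0n => iI cV.
  case/andP: iI => _ iI; by rewrite /= eqSS iI; case/andP: cV => -> ->.
case: cs => [|c cs] //=; rewrite eqSS => /andP[sz /andP[cv vv]].
exists (c, cs); split; [| by rewrite IH sz vv | by []].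
  rewrite [(c, cs).1]/=; case: c cv {vv} => [|c] cv; first by rewrite inE.
  rewrite inE mem_iota /=; lia.
Qed.

Lemma size_VL_gt0 n s : (0 < size (VL n s))%N.
Proof.
elim: n s => [|n IH] s //; rewrite VL_S size_allpairs size_iota muln_gt0 IH.
by [].
Qed.

Lemma validbP s cs : validb s cs = all (fun i => nth 0 cs i < (2 * (s + i)).+1) (iota 0 (size cs)).
Proof.
elim: cs s => [|c cs IH] s //=.
rewrite addn0 IH; congr (_ && _).
rewrite -(addn0 1) iotaDl all_map; apply: eq_all => i /=.
by rewrite add1n addSnnS.
Qed.

Lemma nth_choices t (f : {ffun 'I_t -> 'I_(2 * t)}) (i : 'I_t) :
  nth 0 (ran_choices f) i = f i.
Proof.
rewrite /ran_choices (nth_map i) ?size_enum_ord //.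
by rewrite nth_ord_enum.
Qed.

Lemma size_choices t (f : {ffun 'I_t -> 'I_(2 * t)}) : size (ran_choices f) = t.
Proof. by rewrite size_map size_enum_ord. Qed.

Lemma choices_inj t : injective (@ran_choices t).
Proof.
move=> f g e; apply/ffunP => i; apply: val_inj.
by have := nth_choices f i; rewrite e nth_choices => h; apply: esym; exact: h.
Qed.

Lemma mem_choices t cs :
  (cs \in map (@ran_choices t) (enum (ran_omega t))) = (size cs == t) && validb 0 cs.
Proof.
apply/mapP/idP.
  move=> [f]; rewrite mem_enum inE => /forallP fv ->.
  rewrite size_choices eqxx /= validbP size_choices; apply/allP => i.
  rewrite mem_iota add0n => it.
  by rewrite (nth_choices f (Ordinal it)) add0n; apply: fv.
move=> /andP[/eqP sz]; rewrite validbP sz => /allP va.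
have H (i : 'I_t) : (nth 0 cs i < 2 * t)%N.
  have := va i; rewrite mem_iota add0n ltn_ord add0n => /(_ isT).
  move=> h; apply: (leq_trans h); have := ltn_ord i; lia.
exists [ffun i => Ordinal (H i)].
  rewrite mem_enum inE; apply/forallP => i; rewrite ffunE /=.
  by have := va i; rewrite mem_iota add0n ltn_ord add0n => /(_ isT).
apply: (@eq_from_nth _ 0); first by rewrite size_choices.
move=> i; rewrite sz => it.
by rewrite (nth_choices _ (Ordinal it)) ffunE.
Qed.

Lemma perm_choices t : perm_eq (map (@ran_choices t) (enum (ran_omega t))) (VL t 0).
Proof.
apply: uniq_perm.
- by rewrite map_inj_uniq ?enum_uniq //; apply: choices_inj.
- exact: VL_uniq.
- by move=> cs; rewrite mem_choices mem_VL.
Qed.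

Section Avg.
Variable R : realType.
Local Open Scope ring_scope.

Lemma A_VL n s (G : seq nat -> R) :
  A n s G = (\sum_(cs <- VL n s) G cs) / (size (VL n s))%:R.
Proof.
elim: n s G => [|n IH] s G; first by rewrite /= big_seq1 divr1.
rewrite [A _ _ _]/= VL_S big_allpairs_dep size_allpairs natrM.
rewrite (eq_bigr (fun i : 'I_(2 * s).+1 => (\sum_(cs <- VL n s.+1) G ((i : nat) :: cs)) / (size (VL n s.+1))%:R)); last first.
  by move=> i _; rewrite IH.
rewrite -mulr_suml size_iota.
have -> : forall F : nat -> R, \sum_(i <- iota 0 (2 * s).+1) F i = \sum_(i < (2 * s).+1) F i.
  by move=> F; rewrite -(big_mkord xpredT) /index_iota subn0.
have h1 : ((size (VL n s.+1))%:R : R) != 0 by rewrite pnatr_eq0 -lt0n size_VL_gt0.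
have h2 : (((2 * s).+1)%:R : R) != 0 by rewrite pnatr_eq0.
field; rewrite h1 /=; move: h2; by rewrite -addn1 addnC natrD natrM.
Qed.

Lemma avg_omega t (G : seq nat -> R) :
  (\sum_(f in ran_omega t) G (ran_choices f)) / (#|ran_omega t|)%:R = A t 0 G.
Proof.
rewrite A_VL -(perm_big _ (perm_choices t)) big_map big_enum /=.
by rewrite cardE -(size_map (@ran_choices t)) (perm_size (perm_choices t)).
Qed.

Lemma card_set_sum T (S : {set T}) (P : pred T) :
  (#|[set x in S | P x]|)%:R = \sum_(x in S) (P x : nat)%:R :> R.
Proof.
rewrite -sum1_card natr_sum big_mkcond [RHS]big_mkcond; apply: eq_bigr => x _.
by rewrite inE; case: (x \in S); case: (P x).
Qed.

End Avg.

Unset Implicit Arguments. Set Strict Implicit.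
Local Open Scope ring_scope.

Lemma ind_bound (R : realType) (lam h x : R) : 0 <= h ->
  (nat_of_bool (lam <= `|x|))%:R <= expR (- (h * lam)) * (expR (h * x) + expR ((- h) * x)).
Proof.
move=> h0.
have p1 := expR_ge0 (h * x); have p2 := expR_ge0 ((- h) * x); have p3 := expR_ge0 (- (h * lam)).
case hl: (lam <= `|x|) => /=; last by rewrite mulr_ge0 // addr_ge0.
rewrite mulrDr -!expRD.
have q1 := expR_ge0 (- (h * lam) + h * x); have q2 := expR_ge0 (- (h * lam) + (- h) * x).
move: hl; rewrite ler_normr => /orP[hx|hx].
  have := ler_wpM2l h0 hx => u0';
  have u0 : 0 <= - (h * lam) + h * x by lra. have := expR_ge1Dx (- (h * lam) + h * x); lra.
have := ler_wpM2l h0 hx => u0'.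
have u0 : 0 <= - (h * lam) + (- h) * x by rewrite mulNr -mulrN; lra.
 have := expR_ge1Dx (- (h * lam) + (- h) * x); lra.
Qed.

Theorem mainTheorem4 (R : realType) (lam : R) (t k : nat) :
  0 < lam -> (1 <= t)%N -> (3 <= k)%N ->
  @ran_prob R t (fun f => lam <= `|(@Zk k t f)%:R - ran_expect R k t|)
    <= 2 * expR (- (lam ^+ 2) / (72 * t%:R)).
Proof.
move=> lam0 t1 _.
pose Zc := fun cs : seq nat => ((Zf k t (ran_run cs).2)%:R : R).
have EE : ran_expect R k t = A t 0 Zc by exact: (avg_omega t Zc).
set E := ran_expect R k t.
have PP : @ran_prob R t (fun f => lam <= `|(@Zk k t f)%:R - E|) =
    A t 0 (fun cs => (nat_of_bool (lam <= `|Zc cs - E|))%:R).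
  rewrite /ran_prob card_set_sum.
  exact: (avg_omega t (fun cs => (nat_of_bool (lam <= `|Zc cs - E|))%:R)).
rewrite PP.
have Zb cs : 0 <= Zc cs <= (t + 3)%:R.
  rewrite ler0n /= /Zc ler_nat.
  by apply: leq_trans (count_size _ _) _; rewrite size_iota.
have Eb : 0 <= E <= (t + 3)%:R.
  rewrite /E EE; apply/andP; split.
    by rewrite -(A_const t 0 0); apply: A_le => cs; case/andP: (Zb cs).
  by rewrite -(A_const t 0 (t + 3)%:R); apply: A_le => cs; case/andP: (Zb cs).
have t0 : 0 < t%:R :> R by rewrite ltr0n.
have tt : (t + 3)%:R = t%:R + 3 :> R by rewrite natrD.
have rhs0 : 0 <= 2 * expR (- (lam ^+ 2) / (72 * t%:R)) by rewrite mulr_ge0 ?expR_ge0.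
have [lbig|lsmall] := ltrP ((t + 3)%:R) lam.
  apply: le_trans rhs0; rewrite -(A_const t 0 0); apply: A_le => cs.
  case hl: (lam <= _) => /=; last by []. have := Zb cs; have := Eb; move: hl; rewrite ler_normr => /orP[] ?.
  1,2: move=> /andP[? ?] /andP[? ?]; lra.
pose h := lam / (36 * t%:R).
have h0 : 0 <= h by rewrite divr_ge0 ?mulr_ge0 ?ler0n // ltW.
have hh : `|h| <= 1 / 9.
  rewrite ger0_norm // ler_pdivrMr ?mulr_gt0 //.
  have : (1 <= t%:R :> R) by rewrite ler1n.
  lra.
have hh' : `|- h| <= 1 / 9 by rewrite normrN.
apply: le_trans (A_le (G' := fun cs => expR (- (h * lam)) *
    (expR (h * (Zc cs - E)) + expR ((- h) * (Zc cs - E)))) _ _ _) _.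
  by move=> cs; apply: ind_bound.
rewrite A_scale A_add.
have VE : @V R k t ran_init 0 t = E by rewrite /E EE.
have M1 := @moment R k t t 0 ran_init h erefl hh.
have M2 := @moment R k t t 0 ran_init (- h) erefl hh'.
rewrite VE in M1 M2.
have e : expR (- (h * lam)) * (expR (18 * h ^+ 2 * t%:R) + expR (18 * (- h) ^+ 2 * t%:R)) =
   2 * expR (- (lam ^+ 2) / (72 * t%:R)).
  rewrite sqrrN mulrDr -expRD.
  have -> : - (h * lam) + 18 * h ^+ 2 * t%:R = - (lam ^+ 2) / (72 * t%:R).
    rewrite /h; field; lra.
  ring.
rewrite -e; apply: ler_wpM2l; first exact: expR_ge0.
exact: lerD M1 M2.
Qed.
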